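(* Let $G=(V,E)$ be a unit-weight graph and let $\theta\in[0,1]^V$ be an arbitrary stable solution. Then there exists a distribution $\mathcal{D}$ supported on independent sets of $G$ such that $\Pr_{S\sim\mathcal{D}}[v\in S]=\theta_v$ for every $v\in V$.
   Context: A unit-weight graph corresponds to a symmetric matrix $W\in\{0,1\}^{V\times V}$ with $W_{v,v}=1$, where $\{u,v\}\in E$ iff $u\ne v$ and $W_{u,v}=1$. A vector $\theta\in\mathbb{R}_{\ge0}^V$ is feasible if $W\theta\ge\mathbf 1$ coordinatewise, and is a stable solution if it is feasible and for every $v\in V$, $\theta_v=\min\{x\ge0:x+\sum_{u:\{u,v\}\in E}\theta_u\ge1\}$. *)

(* Defs.v *)
From mathcomp Require Import all_boot all_order all_algebra.
Set Implicit Arguments. Unset Strict Implicit. Unset Printing Implicit Defensive.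
Import Order.TTheory GRing.Theory Num.Theory.
Local Open Scope ring_scope.

(* A unit-weight graph on the finite vertex set V is a symmetric 0/1 matrix
   W : V -> V -> bool with W v v = true. *)
Definition unit_weight_graph (V : finType) (W : V -> V -> bool) : Prop :=
  (forall u v, W u v = W v u) /\ (forall v, W v v).

Definition edge (V : finType) (W : V -> V -> bool) (u v : V) : bool :=
  (u != v) && W u v.

Definition feasible (R : realFieldType) (V : finType) (W : V -> V -> bool)
    (theta : V -> R) : Prop :=
  (forall v, 0 <= theta v) /\
  (forall v, 1 <= \sum_(u | W v u) theta u).

Definition is_min_nonneg_completion (R : realFieldType) (V : finType)
    (W : V -> V -> bool) (theta : V -> R) (v : V) (x : R) : Prop :=
  [/\ 0 <= x, 1 <= x + \sum_(u | edge W v u) theta u &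
      forall y, 0 <= y -> 1 <= y + \sum_(u | edge W v u) theta u -> x <= y].

Definition stable_solution (R : realFieldType) (V : finType)
    (W : V -> V -> bool) (theta : V -> R) : Prop :=
  feasible W theta /\
  (forall v, is_min_nonneg_completion W theta v (theta v)).

Definition independent_set (V : finType) (W : V -> V -> bool) (S : {set V}) : bool :=
  [forall u in S, forall v in S, ~~ edge W u v].

Definition distribution (R : realFieldType) (V : finType) (D : {set V} -> R) : Prop :=
  (forall S, 0 <= D S) /\ \sum_(S : {set V}) D S = 1.

(* Main.v *)
Require Import Defs.
From mathcomp Require Import all_boot all_order all_algebra.
From mathcomp Require Import lra.
Import Order.TTheory GRing.Theory Num.Theory.
Local Open Scope ring_scope.
Set Implicit Arguments. Unset Strict Implicit.

Section Greedy.
Variables (R : realFieldType) (V : finType) (W : V -> V -> bool) (theta : V -> R).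
Hypothesis Wsym : forall u v, W u v = W v u.
Hypothesis th0 : forall v, 0 <= theta v.
Hypothesis Hst : forall v, 0 < theta v -> theta v + \sum_(u | edge W v u) theta u <= 1.

Definition marg (L : seq (R * {set V})) v := \sum_(x <- L | v \in x.2) x.1.

Definition Inv (s : seq V) (L : seq (R * {set V})) : Prop :=
  [/\ (forall x, x \in L -> [/\ 0 <= x.1, independent_set W x.2 & {subset x.2 <= s}]),
      \sum_(x <- L) x.1 = 1 &
      forall v, v \in s -> marg L v = theta v].

Lemma edge_sym u v : edge W u v = edge W v u.
Proof. by rewrite /edge Wsym eq_sym. Qed.

Lemma marg_out s L v : Inv s L -> v \notin s -> marg L v = 0.
Proof.
case=> H _ _ vs; rewrite /marg big_seq_cond big1 // => x /andP[xL vx].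
by have [_ _ /(_ v vx)] := H x xL; rewrite (negbTE vs).
Qed.

Lemma marg_le s L v : Inv s L -> marg L v <= theta v.
Proof.
move=> I; case: (boolP (v \in s)) => vs.
  by case: I => _ _ ->.
by rewrite (marg_out I vs).
Qed.

Definition free w (S : {set V}) := [forall u in S, ~~ edge W w u].

Lemma M_ge s L w : Inv s L -> 0 < theta w ->
  theta w <= \sum_(x <- L | free w x.2) x.1.
Proof.
move=> I tw; have := I; case=> H Hs Hm.
have Hnf : \sum_(x <- L | ~~ free w x.2) x.1 <= \sum_(u | edge W w u) theta u.
  apply: (@le_trans _ _ (\sum_(x <- L) \sum_(u | edge W w u && (u \in x.2)) x.1)).
    rewrite [X in _ <= X](bigID (fun x => free w x.2)) /= -[X in X <= _]add0r.
    apply: (@lerD _ 0).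
      rewrite big_seq_cond; apply: sumr_ge0 => x /andP[xL _]; apply: sumr_ge0 => u _; by case: (H x xL).
    rewrite [X in X <= _]big_seq_cond [X in _ <= X]big_seq_cond.
    apply: ler_sum => x /andP[xL nf].
    have [x0 _ _] := H x xL.
    move: nf; rewrite /free negb_forall => /existsP[u0]; rewrite negb_imply negbK => /andP[u0x eu0].
    rewrite (bigD1 u0) /=; last by rewrite eu0 u0x.
    rewrite lerDl; apply: sumr_ge0 => *; done.
  rewrite (exchange_big_dep (fun u => edge W w u)) /=; last by move=> ? ? _ /andP[].
  apply: ler_sum => u eu.
  have := marg_le u I; rewrite /marg.
  by under eq_bigl do rewrite eu.
have h1 := Hst tw.
have h2 : \sum_(x <- L) x.1 = \sum_(x <- L | free w x.2) x.1 + \sum_(x <- L | ~~ free w x.2) x.1.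
  exact: bigID.
lra.
Qed.

Definition cst w (L : seq (R * {set V})) := theta w / \sum_(x <- L | free w x.2) x.1.

Definition fstep w c (x : R * {set V}) : seq (R * {set V}) :=
  if free w x.2 then [:: (c * x.1, w |: x.2); ((1 - c) * x.1, x.2)] else [:: x].

Definition step w L := flatten [seq fstep w (cst w L) x | x <- L].

Lemma sum_step w L (P : pred (R * {set V})) (F : R * {set V} -> R) :
  \sum_(y <- step w L | P y) F y = \sum_(x <- L) \sum_(y <- fstep w (cst w L) x | P y) F y.
Proof. by rewrite /step big_flatten big_map. Qed.

Lemma indep_add w S : independent_set W S -> free w S -> independent_set W (w |: S).
Proof.
move=> /forall_inP iS /forall_inP fS; apply/forall_inP => u; rewrite in_setU1 => Hu.
apply/forall_inP => v; rewrite in_setU1 => Hv.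
case/orP: Hu => [/eqP->|uS].
  case/orP: Hv => [/eqP->|vS]; first by rewrite /edge eqxx.
  exact: fS.
case/orP: Hv => [/eqP->|vS]; first by rewrite edge_sym; exact: fS.
exact: (forall_inP (iS u uS)).
Qed.

Lemma cst_props s L w : Inv s L ->
  0 <= cst w L <= 1 /\ cst w L * \sum_(x <- L | free w x.2) x.1 = theta w.
Proof.
move=> I; rewrite /cst; set M := \sum_(x <- L | free w x.2) x.1.
have := th0 w; rewrite le0r => /orP[/eqP->|tw].
  by rewrite !mul0r lexx ler01.
have hM := M_ge I tw; rewrite -/M in hM.
have M0 : 0 < M by apply: lt_le_trans hM.
split; last by rewrite divfK // gt_eqF.
apply/andP; split; first by rewrite divr_ge0 // ltW.
by rewrite ler_pdivrMr // mul1r.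
Qed.

Lemma step_inv s L w : w \notin s -> Inv s L -> Inv (w :: s) (step w L).
Proof.
move=> ws I; have [/andP[c0 c1] cM] := cst_props w I.
have := I; case=> H Hs Hm.
set c := cst w L in c0 c1 cM.
split.
- move=> y /flattenP[l /mapP[x xL ->]]; have [x0 xi xs] := H x xL.
  rewrite /fstep; case: ifP => fx.
    rewrite !inE => /orP[/eqP->|/eqP->] /=.
      split; first by rewrite mulr_ge0.
        exact: indep_add.
      by move=> u; rewrite in_setU1 inE => /orP[->//|/xs ->]; rewrite orbT.
    split; first by rewrite mulr_ge0 // subr_ge0.
      by [].
    by move=> u /xs; rewrite inE => ->; rewrite orbT.
  rewrite inE => /eqP-> /=; split => //.
  by move=> u /xs; rewrite inE => ->; rewrite orbT.
- rewrite sum_step -Hs; apply: eq_bigr => x _.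
  rewrite /fstep; case: ifP => _; rewrite !big_cons big_nil /=; lra.
- move=> v; rewrite inE /marg sum_step => /orP[/eqP->|vs].
    rewrite -cM mulr_sumr [RHS]big_mkcond /= [LHS]big_seq [RHS]big_seq; apply: eq_bigr => x xL.
    have [_ _ xs] := H x xL.
    have wx : w \notin x.2 by apply/negP => /xs; rewrite (negbTE ws).
    rewrite /fstep; case: ifP => _; rewrite !big_cons big_nil /= ?in_setU1 ?eqxx /= (negbTE wx) //.
    by rewrite addr0.
  rewrite -(Hm v vs) /marg [RHS]big_mkcond /=; apply: eq_bigr => x _.
  have vw : v != w by apply/eqP => vw; move: ws; rewrite -vw vs.
  rewrite /fstep; case: ifP => _; rewrite !big_cons big_nil /= ?in_setU1 ?(negbTE vw) /=;
    case: (v \in x.2) => //; lra.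
Qed.

Lemma build (s : seq V) : uniq s -> exists L, Inv s L.
Proof.
elim: s => [|w s IH] /=.
  move=> _; exists [:: (1, set0)]; split.
  - move=> x; rewrite inE => /eqP-> /=; split => //.
      by apply/forall_inP => u; rewrite in_set0.
    by move=> u; rewrite in_set0.
  - by rewrite big_cons big_nil addr0.
  - by [].
case/andP=> ws us; have [L IL] := IH us; exists (step w L); exact: step_inv.
Qed.
End Greedy.

Theorem lemma3p6 (R : realFieldType) (V : finType) (W : V -> V -> bool)
    (theta : V -> R) :
  unit_weight_graph W ->
  (forall v, 0 <= theta v <= 1) ->
  stable_solution W theta ->
  exists D : {set V} -> R,
    [/\ distribution D,
        (forall S, D S != 0 -> independent_set W S) &
        (forall v, \sum_(S : {set V} | v \in S) D S = theta v)].
Proof.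
move=> [Wsym _] h01 [_ Hmin].
have th0 v : 0 <= theta v by case/andP: (h01 v).
have Hst : forall v, 0 < theta v -> theta v + \sum_(u | edge W v u) theta u <= 1.
  move=> v tv; have [_ _ Hm] := Hmin v; set S := \sum_(u | edge W v u) theta u in Hm *.
  case: (lerP 0 (1 - S)) => h.
    have := Hm (1 - S) h; rewrite subrK lexx => /(_ isT); lra.
  have := Hm 0 (lexx 0); rewrite add0r => /(_ (ltW _)).
  have h' : 1 < S by lra.
  move=> /(_ h'); lra.
have [L [H Hs Hm]] := build Wsym th0 Hst (enum_uniq V).
exists (fun S => \sum_(x <- L | x.2 == S) x.1); split.
- split.
    move=> S; rewrite big_seq_cond; apply: sumr_ge0 => x /andP[xL _].
    by case: (H x xL).
  rewrite (exchange_big_dep predT) //= -Hs; apply: eq_bigr => x _.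
  rewrite (eq_bigl (fun S => S == x.2)) ?big_pred1_eq //.
- move=> S; apply: contraR => nI; rewrite big_seq_cond big1 // => x /andP[xL /eqP e].
  have [_ xi _] := H x xL; by rewrite -e xi in nI.
- move=> v; rewrite (exchange_big_dep predT) //= -(Hm v (mem_enum _ v)) /marg [RHS]big_mkcond /=.
  apply: eq_bigr => x _; case: (boolP (v \in x.2)) => h.
    rewrite (eq_bigl (fun S => S == x.2)) ?big_pred1_eq // => S /=.
    by apply/andP/eqP => [[_ /eqP ->]|->]; split.
  rewrite big_pred0 // => S /=; apply/andP => -[vS /eqP e]; by rewrite e vS in h.
Qed.
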